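(* Let $R$ be a field, $S$ an idempotent semifield, and $v:R\to S$ a B\'ezout valuation with $v^\circ:R^\circ\to S^\circ$ surjective, and consider the correspondence between ideals $I\subseteq R^\circ$ and $k$-ideals $J\subseteq S^\circ$ given by $J=v(I)$, $I=v^{-1}(J)$. This correspondence preserves radical ideals and primary ideals.
   Context: An idempotent semiring is a commutative semiring with $a+a=a$, ordered by $a\le b$ iff $a+b=b$; a semifield has all nonzero elements invertible. A seminorm $v:R\to S$ satisfies $v(0)=0$, $v(1)=v(-1)=1$, $v(ab)\le v(a)v(b)$, $v(a+b)\le v(a)+v(b)$; a valuation is a multiplicative seminorm with $v(a)\ne0$ for $a\ne0$. $R^\circ=\{a:v(a)\le1\}$, $S^\circ=\{x\le1\}$, $v^\circ=v|_{R^\circ}$. $v$ is B\'ezout if for all $a,b\in R$ there are $x,y\in R^\circ$ with $v(xa+yb)=v(a)+v(b)$. Semiring ideals contain $0$ and are closed under addition and multiplication by semiring elements; a $k$-ideal $I$ satisfies: $a+b\in I$, $a\in I\Rightarrow b\in I$; prime: complement multiplicatively closed; radical: $x^n\in I\Rightarrow x\in I$; primary: $xy\in I$, $x\notin I\Rightarrow y^n\in I$ for some $n$. Under the stated hypotheses the two maps are mutually inverse bijections preserving primes. *)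

(* Defs.v *)
From HB Require Import structures.
From mathcomp Require Import all_boot all_order all_algebra.
Set Implicit Arguments. Unset Strict Implicit. Unset Printing Implicit Defensive.
Import GRing.Theory.
Local Open Scope ring_scope.

Definition sle (S : comNzSemiRingType) (a b : S) : Prop := a + b = b.

Definition idempotent_semifield (S : comNzSemiRingType) : Prop :=
  (forall a : S, a + a = a) /\
  (forall a : S, a <> 0 -> exists b : S, a * b = 1).

Record seminorm (R : comNzRingType) (S : comNzSemiRingType) (v : R -> S) : Prop := {
  sn0 : v 0 = 0;
  sn1 : v 1 = 1;
  snN1 : v (-1) = 1;
  snM : forall a b, sle (v (a * b)) (v a * v b);
  snD : forall a b, sle (v (a + b)) (v a + v b) }.

Record valuation (R : comNzRingType) (S : comNzSemiRingType) (v : R -> S) : Prop := {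
  val_seminorm : seminorm v;
  val_mul : forall a b, v (a * b) = v a * v b;
  val_nz : forall a, a <> 0 -> v a <> 0 }.

Definition Rcirc (R : comNzRingType) (S : comNzSemiRingType) (v : R -> S) (a : R) : Prop :=
  sle (v a) 1.
Definition Scirc (S : comNzSemiRingType) (x : S) : Prop := sle x 1.

Definition bezout (R : comNzRingType) (S : comNzSemiRingType) (v : R -> S) : Prop :=
  forall a b : R, exists x y : R,
    Rcirc v x /\ Rcirc v y /\ v (x * a + y * b) = v a + v b.

Definition vcirc_surjective (R : comNzRingType) (S : comNzSemiRingType) (v : R -> S) : Prop :=
  forall s : S, Scirc s -> exists a : R, Rcirc v a /\ v a = s.

Definition Rcirc_ideal (R : comNzRingType) (S : comNzSemiRingType) (v : R -> S)
  (I : R -> Prop) : Prop :=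
  (forall a, I a -> Rcirc v a) /\ I 0 /\
  (forall a b, I a -> I b -> I (a + b)) /\
  (forall r a, Rcirc v r -> I a -> I (r * a)).

Definition Scirc_kideal (S : comNzSemiRingType) (J : S -> Prop) : Prop :=
  (forall x, J x -> Scirc x) /\ J 0 /\
  (forall x y, J x -> J y -> J (x + y)) /\
  (forall r x, Scirc r -> J x -> J (r * x)) /\
  (forall x y, Scirc x -> Scirc y -> J (x + y) -> J x -> J y).

(* Radical / primary, relative to an ambient semiring given by a predicate A. *)
Definition radical_in (T : comNzSemiRingType) (A I : T -> Prop) : Prop :=
  forall x n, A x -> I (x ^+ n.+1) -> I x.

Definition primary_in (T : comNzSemiRingType) (A I : T -> Prop) : Prop :=
  forall x y, A x -> A y -> I (x * y) -> ~ I x -> exists n, I (y ^+ n.+1).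

Definition vimage (R : comNzRingType) (S : comNzSemiRingType) (v : R -> S)
  (I : R -> Prop) : S -> Prop := fun s => exists a, I a /\ v a = s.
Definition vpreimage (R : comNzRingType) (S : comNzSemiRingType) (v : R -> S)
  (J : S -> Prop) : R -> Prop := fun a => J (v a).

(* Main.v *)
Require Import Defs.
From mathcomp Require Import all_boot all_order all_algebra.
Local Open Scope ring_scope.
Import GRing.Theory.

Lemma vX (R : fieldType) (S : comNzSemiRingType) (v : R -> S) :
  valuation v -> forall x n, v (x ^+ n) = v x ^+ n.
Proof.
move=> hv x; elim=> [|n IH]; first by rewrite !expr0 (sn1 (val_seminorm hv)).
by rewrite !exprS (val_mul hv) IH.
Qed.

Lemma sat (R : fieldType) (S : comNzSemiRingType) (v : R -> S) (I : R -> Prop) a c :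
  valuation v -> Rcirc_ideal v I -> I a -> sle (v c) (v a) -> I c.
Proof.
move=> hv [_ [I0 [_ IM]]] Ia hle.
have [a0|anz] := eqVneq a 0.
  move: hle; rewrite a0; rewrite /sle (sn0 (val_seminorm hv)) addr0 => vc0.
  have [c0|cnz] := eqVneq c 0; first by rewrite c0.
  by exfalso; apply: (val_nz hv (a:=c)) => //; apply/eqP.
have -> : c = (c / a) * a by rewrite divfK.
apply: IM => //.
rewrite /Rcirc /sle (val_mul hv).
have h1 : v a * v a^-1 = 1 by rewrite -(val_mul hv) mulfV // (sn1 (val_seminorm hv)).
by rewrite -h1 -mulrDl hle.
Qed.

Arguments sat {R S v I a c}.
Arguments vX {R S v}.

Theorem proposition2p14 (R : fieldType) (S : comNzSemiRingType) (v : R -> S) :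
  idempotent_semifield S ->
  valuation v ->
  bezout v ->
  vcirc_surjective v ->
  (forall I : R -> Prop, Rcirc_ideal v I ->
     (radical_in (Rcirc v) I -> radical_in (@Scirc S) (vimage v I)) /\
     (primary_in (Rcirc v) I -> primary_in (@Scirc S) (vimage v I))) /\
  (forall J : S -> Prop, Scirc_kideal J ->
     (radical_in (@Scirc S) J -> radical_in (Rcirc v) (vpreimage v J)) /\
     (primary_in (@Scirc S) J -> primary_in (Rcirc v) (vpreimage v J))).
Proof.
move=> [idem _] hv _ hs; split.
  move=> I hI; split.
    move=> hr x n Sx [a [Ia ea]].
    have [b [Rb eb]] := hs x Sx.
    exists b; split => //; apply: (hr b n Rb).
    by apply: (sat hv hI Ia); rewrite (vX hv) ea eb /sle idem.
  move=> hp x y Sx Sy [a [Ia ea]] nx.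
  have [b [Rb eb]] := hs x Sx.
  have [c [Rc ec]] := hs y Sy.
  have Ibc : I (b * c).
    by apply: (sat hv hI Ia); rewrite (val_mul hv) eb ec ea /sle idem.
  have nb : ~ I b by move=> Ib; apply: nx; exists b.
  have [n hn] := hp b c Rb Rc Ibc nb.
  by exists n; exists (c ^+ n.+1); split => //; rewrite (vX hv) ec.
move=> J hJ; split.
  move=> hr x n Rx; rewrite /vpreimage (vX hv) => h.
  exact: (hr (v x) n Rx h).
move=> hp x y Rx Ry; rewrite /vpreimage (val_mul hv) => h nx.
have [n hn] := hp (v x) (v y) Rx Ry h nx.
by exists n; rewrite (vX hv).
Qed.
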